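(* $X=\mathrm{Cay}(\mathfrak{a},\mathfrak{c},\mathfrak{d})$; consequently $\{\mathfrak{a},\mathfrak{c},\mathfrak{d}\}$ is Wilf-equivalent over Cayley permutations to the pattern $11$, i.e. $|\mathrm{Cay}_n(\mathfrak{a},\mathfrak{c},\mathfrak{d})|=|\mathrm{Cay}_n(11)|=n!$ for all $n$.
   Context: A Cayley permutation of length $n$ is a word $x=x(1)\cdots x(n)$ of positive integers in which every integer from $1$ to $\max(x)$ occurs; $\mathrm{Cay}_n$ is the set of these. $\mathrm{Cay}_n(11)$ is the set of permutations of $[n]$. Mesh patterns (for $x\in\mathrm{Cay}_n$): $x$ contains $\mathfrak{a}$ if there are indices $i<j<n$ with $x(j)<x(i)=x(j+1)$. $x$ contains $\mathfrak{c}$ if there are indices $i<j<n$ with $x(j+1)<x(i)<x(j)$ such that no entry of $x$ has value strictly between $x(j+1)$ and $x(i)$, no index $m\le j$ has $x(m)=x(j+1)$, and no index $m>j+1$ has $x(m)=x(i)$. $x$ contains $\mathfrak{d}$ if there is an index $i<n$ with $x(i+1)<x(i)$ such that no entry of $x$ has value strictly between $x(i+1)$ and $x(i)$, no index $m<i$ has $x(m)=x(i+1)$, and no index $m>i+1$ has $x(m)=x(i)$. $\mathrm{Cay}(\mathfrak{a},\mathfrak{c},\mathfrak{d})$ is the set of Cayley permutations containing none of them. The map $\eta$: for a permutation $\pi$ of $[n]$ and $i\in[n]$, let $J(i)=0$ if $\pi(i)=1$ and otherwise $J(i)$ is the index with $\pi(J(i))=\pi(i)-1$. The site before $\pi(1)$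 is $\eta$-active; the site after $\pi(i)$ is $\eta$-active iff $J(i)<i$, or $i<n$ and $\pi(i)<\pi(i+1)$. Let $\tilde\upsilon(\pi)(j)$ be the number of $\eta$-active sites to the left of $\pi(j)$. Then $\eta(\pi)$ is the word with $\eta(\pi)(\pi(j))=\tilde\upsilon(\pi)(j)$ for all $j$. $X=\{\eta(\pi):\pi \text{ a permutation}\}$. *)

(* Defs.v *)
From mathcomp Require Import all_boot.
Set Implicit Arguments. Unset Strict Implicit. Unset Printing Implicit Defensive.

(* x(i), 1-based: the i-th letter of x (i in 1..size x). *)
Definition at_ (x : seq nat) (i : nat) : nat := nth 0 x i.-1.

Definition wmax (x : seq nat) : nat := foldr maxn 0 x.

Definition cayley (x : seq nat) : Prop :=
  (forall i, 1 <= i <= size x -> 0 < at_ x i) /\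
  (forall k, 1 <= k <= wmax x -> exists2 i, 1 <= i <= size x & at_ x i = k).

Definition contains11 (x : seq nat) : Prop :=
  exists i j, [/\ 1 <= i, i < j, j <= size x & at_ x i = at_ x j].

Definition contains_a (x : seq nat) : Prop :=
  exists i j, [/\ 1 <= i, i < j, j < size x,
     at_ x j < at_ x i & at_ x i = at_ x j.+1].

Definition contains_c (x : seq nat) : Prop :=
  exists i j, [/\ 1 <= i, i < j, j < size x,
     at_ x j.+1 < at_ x i < at_ x j &
     [/\ (forall m, 1 <= m <= size x -> ~ (at_ x j.+1 < at_ x m < at_ x i)),
         (forall m, 1 <= m <= j -> at_ x m <> at_ x j.+1) &
         (forall m, j.+1 < m <= size x -> at_ x m <> at_ x i)]].

Definition contains_d (x : seq nat) : Prop :=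
  exists i, [/\ 1 <= i, i < size x, at_ x i.+1 < at_ x i &
     [/\ (forall m, 1 <= m <= size x -> ~ (at_ x i.+1 < at_ x m < at_ x i)),
         (forall m, 1 <= m < i -> at_ x m <> at_ x i.+1) &
         (forall m, i.+1 < m <= size x -> at_ x m <> at_ x i)]].

Definition cay_acd (x : seq nat) : Prop :=
  cayley x /\ ~ contains_a x /\ ~ contains_c x /\ ~ contains_d x.

Definition cay_11 (x : seq nat) : Prop := cayley x /\ ~ contains11 x.

Definition is_perm (pi : seq nat) : Prop := perm_eq pi (iota 1 (size pi)).

Definition Jidx (pi : seq nat) (i : nat) : nat :=
  if at_ pi i == 1 then 0 else (index (at_ pi i).-1 pi).+1.

(* site s (0 = before pi(1), s >= 1 = after pi(s)) is eta-active *)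
Definition active (pi : seq nat) (s : nat) : bool :=
  (s == 0) ||
  ((Jidx pi s < s) || ((s < size pi) && (at_ pi s < at_ pi s.+1))).

Definition ups (pi : seq nat) (j : nat) : nat := count (active pi) (iota 0 j).

(* eta(pi)(pi(j)) = ups(pi)(j), i.e. eta(pi)(k) = ups(pi)(pi^{-1}(k)) *)
Definition eta (pi : seq nat) : seq nat :=
  [seq ups pi (index k pi).+1 | k <- iota 1 (size pi)].

Definition card_len (P : seq nat -> Prop) (n c : nat) : Prop :=
  exists s : seq (seq nat), [/\ uniq s,
    (forall x, x \in s <-> (size x = n /\ P x)) & size s = c].

(* Main.v *)
Require Import Defs.
From mathcomp Require Import all_boot zify.
Set Implicit Arguments. Unset Strict Implicit. Unset Printing Implicit Defensive.

Ltac nsz := repeat (match goal with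
 | H : context [@size (Equality.sort ?T) ?s] |- _ => progress change (@size (Equality.sort T) s) with (@size nat s) in H
 | |- context [@size (Equality.sort ?T) ?s] => progress change (@size (Equality.sort T) s) with (@size nat s)
 end).
Ltac slia := nsz; lia.

Definition P (pi : seq nat) k := (index k pi).+1.

Lemma perm_uniq' pi : is_perm pi -> uniq pi.
Proof. by move=> Hp; rewrite (perm_uniq Hp) iota_uniq. Qed.

Lemma mem_pi pi k : is_perm pi -> (k \in pi) = (1 <= k <= @size nat pi).
Proof. by move=> Hp; rewrite (perm_mem Hp) mem_iota; slia. Qed.

Lemma atP pi k : k \in pi -> at_ pi (P pi k) = k.
Proof. by move=> H; rewrite /at_ /P /= nth_index. Qed.

Lemma P_range pi k : k \in pi -> 1 <= P pi k <= @size nat pi.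
Proof. by move=> H; rewrite /P; rewrite -index_mem in H; slia. Qed.

Lemma at_mem pi t : 1 <= t <= @size nat pi -> at_ pi t \in pi.
Proof. move=> H; have h : t.-1 < size pi by slia. exact: mem_nth h. Qed.

Lemma P_at pi t : uniq pi -> 1 <= t <= @size nat pi -> P pi (at_ pi t) = t.
Proof. by move=> U H; rewrite /P /at_ index_uniq //; slia. Qed.

Lemma P_inj pi k k' : k \in pi -> k' \in pi -> P pi k = P pi k' -> k = k'.
Proof. by move=> H H' E; rewrite -(atP H) -(atP H') E. Qed.

Lemma at_range pi t : is_perm pi -> 1 <= t <= @size nat pi -> 1 <= at_ pi t <= @size nat pi.
Proof. by move=> Hp H; rewrite -mem_pi // at_mem. Qed.

Lemma upsS pi t : ups pi t.+1 = ups pi t + active pi t.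
Proof. by rewrite /ups -addn1 iotaD count_cat /= addn0. Qed.

Lemma ups0 pi : ups pi 0 = 0. Proof. by []. Qed.
Lemma ups1 pi : ups pi 1 = 1. Proof. by []. Qed.

Lemma ups_mono pi t t' : t <= t' -> ups pi t <= ups pi t'.
Proof.
move=> H; rewrite -(subnKC H); elim: (t' - t) => [|d IH]; first by rewrite addn0.
by rewrite addnS upsS; slia.
Qed.

Lemma ups_lt pi a b : ups pi a < ups pi b -> a < b.
Proof. by move=> H; case: (leqP b a) => // /(ups_mono pi); slia. Qed.

Lemma ups_flat pi a s b : a <= s < b -> ups pi a = ups pi b -> ~~ active pi s.
Proof.
move=> /andP [H1 H2] E; apply/negP => A.
have := ups_mono pi H1; have := ups_mono pi H2; rewrite upsS A; slia.
Qed.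

Lemma inactive_facts pi s : 1 <= s -> ~~ active pi s ->
  [/\ at_ pi s != 1, s <= P pi (at_ pi s).-1 & (s < @size nat pi -> at_ pi s.+1 <= at_ pi s)].
Proof.
move=> s1; rewrite /active /Jidx /P; case: (at_ pi s =P 1) => E /=; first by slia.
case: (s =P 0) => [|_] /=; first slia.
case: ltnP => //= H1 H2; split => // h; move: H2; by rewrite h /= -leqNgt.
Qed.

Lemma active_facts pi s : 1 <= s -> active pi s ->
  [\/ at_ pi s = 1, P pi (at_ pi s).-1 < s | at_ pi s < at_ pi s.+1].
Proof.
move=> s1; rewrite /active /Jidx /P; case: (at_ pi s =P 1) => E /=; first by move=> _; apply: Or31.
case: (s =P 0) => [|_] /=; first slia.
by case/orP => [H|/andP [_ H]]; [apply: Or32 | apply: Or33].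
Qed.

Lemma dec_chain pi a b : (forall s, a <= s < b -> at_ pi s.+1 <= at_ pi s) -> a <= b ->
  at_ pi b <= at_ pi a.
Proof.
move=> H ab; rewrite -(subnKC ab) in H *; elim: (b - a) H => [|d IH] H; first by rewrite addn0.
rewrite addnS; apply: leq_trans (H _ _) (IH _); first slia.
by move=> s Hs; apply: H; slia.
Qed.

Lemma size_eta pi : size (eta pi) = @size nat pi.
Proof. by rewrite size_map size_iota. Qed.

Lemma at_eta pi k : 1 <= k <= @size nat pi -> at_ (eta pi) k = ups pi (P pi k).
Proof.
move=> H; rewrite /at_ /eta (nth_map 0); last by rewrite size_iota; slia.
by rewrite nth_iota; [congr ups; rewrite /P; congr (index _ _).+1; slia | slia].
Qed.


Lemma not_a pi : is_perm pi -> ~ contains_a (eta pi).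
Proof.
move=> Hp [i [j [i1 ij jn H1 H2]]]; rewrite size_eta in jn.
have U := perm_uniq' Hp.
have mi : i \in pi by rewrite mem_pi //; slia.
have mj : j \in pi by rewrite mem_pi //; slia.
have mj1 : j.+1 \in pi by rewrite mem_pi //; slia.
rewrite !at_eta in H1 H2; try slia.
rewrite H2 in H1.
have Rj := P_range mj; have Rj1 := P_range mj1; have Ri := P_range mi.
have pj_lt := ups_lt H1.
have Ap : active pi (P pi j.+1).
  apply/negPn/negP => /(inactive_facts) [|_ h _]; first slia.
  by move: h; rewrite atP //=; slia.
have nq : P pi i <> P pi j.+1 by move=> /(P_inj mi mj1); slia.
case: (ltngtP (P pi i) (P pi j.+1)) => // h.
- have D : at_ pi (P pi j.+1) <= at_ pi (P pi i).
    apply: dec_chain; last slia.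
    move=> s Hs; have := ups_flat Hs H2; move=> /(inactive_facts) [|_ _ ]; first slia.
    move=> X; apply: X; slia.
  by move: D; rewrite !atP //; slia.
- have : P pi j.+1 <= P pi j.+1 < P pi i by slia.
  by move=> /ups_flat /(_ (esym H2)); rewrite Ap.
Qed.


Lemma not_d pi : is_perm pi -> ~ contains_d (eta pi).
Proof.
move=> Hp [i [i1 isz H0 [H1 H2 H3]]]; rewrite size_eta in isz H1 H3.
have U := perm_uniq' Hp.
have mi : i \in pi by rewrite mem_pi //; slia.
have mi1 : i.+1 \in pi by rewrite mem_pi //; slia.
have Ri := P_range mi; have Ri1 := P_range mi1.
rewrite !at_eta in H0; try slia.
have pq := ups_lt H0.
have pr : 1 <= (P pi i.+1).+1 <= @size nat pi by slia.
have mr := at_mem pr; have Pr := P_at U pr; have Rr := at_range Hp pr.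
set r := at_ pi (P pi i.+1).+1 in mr Pr Rr *.
have ai := atP mi1.
have p1 : 1 <= P pi i.+1 by slia.
have qn : P pi i <= @size nat pi by slia.
have Er : at_ (eta pi) r = ups pi (P pi i.+1).+1 by rewrite at_eta ?Pr //; slia.
case A: (active pi (P pi i.+1)).
- case: (active_facts p1 A) => [h|h|ir].
  + by move: h; rewrite ai; slia.
  + by move: h; rewrite ai /=; slia.
  rewrite ai in ir.
  have e1 : ups pi (P pi i.+1).+1 = (ups pi (P pi i.+1)).+1 by rewrite upsS A addn1.
  have e2 := ups_mono pi (pq : (P pi i.+1).+1 <= P pi i).
  have := H1 r; rewrite Er at_eta; last slia.
  rewrite at_eta; last slia.
  move=> H1r.
  have E : ups pi (P pi i.+1).+1 = ups pi (P pi i).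
    case: (ltngtP (ups pi (P pi i.+1).+1) (ups pi (P pi i))) => //; last slia.
    move=> h; exfalso; apply: H1r; first slia. by rewrite h andbT e1.
  apply: (H3 r); first slia.
  by rewrite Er at_eta ?E //; slia.
- have [_ _ h] := inactive_facts p1 (negbT A).
  move: (h (leq_trans pq qn)); rewrite ai => rle.
  have e1 : ups pi (P pi i.+1).+1 = ups pi (P pi i.+1) by rewrite upsS A addn0.
  have rne : r <> i.+1 by move=> E; move: Pr; rewrite E; slia.
  have rne' : r <> i.
    move=> E; move: Pr; rewrite E => Pi; move: H0; rewrite Pi e1; slia.
  apply: (H2 r); first slia.
  by rewrite Er e1 at_eta //; slia.
Qed.

Lemma not_c pi : is_perm pi -> ~ contains_c (eta pi).
Proof.
move=> Hp [i [j [i1 ij jsz /andP [H0 H0'] [H1 H2 H3]]]]; rewrite size_eta in jsz H1 H3.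
have U := perm_uniq' Hp.
have mi : i \in pi by rewrite mem_pi //; slia.
have mj : j \in pi by rewrite mem_pi //; slia.
have mj1 : j.+1 \in pi by rewrite mem_pi //; slia.
have Ri := P_range mi; have Rj1 := P_range mj1; have Rj := P_range mj.
rewrite !at_eta in H0 H0'; try slia.
have pq := ups_lt H0.
have pj := ups_lt (ltn_trans H0 H0').
have pr : 1 <= (P pi j.+1).+1 <= @size nat pi by slia.
have mr := at_mem pr; have Pr := P_at U pr; have Rr := at_range Hp pr.
set r := at_ pi (P pi j.+1).+1 in mr Pr Rr *.
have ai := atP mj1.
have p1 : 1 <= P pi j.+1 by slia.
have Er : at_ (eta pi) r = ups pi (P pi j.+1).+1 by rewrite at_eta ?Pr //; slia.
case A: (active pi (P pi j.+1)).
- case: (active_facts p1 A) => [h|h|ir].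
  + by move: h; rewrite ai; slia.
  + by move: h; rewrite ai /=; slia.
  rewrite ai in ir.
  have e1 : ups pi (P pi j.+1).+1 = (ups pi (P pi j.+1)).+1 by rewrite upsS A addn1.
  have e2 := ups_mono pi (pq : (P pi j.+1).+1 <= P pi i).
  have := H1 r; rewrite Er at_eta; last slia.
  rewrite at_eta; last slia.
  move=> H1r.
  have E : ups pi (P pi j.+1).+1 = ups pi (P pi i).
    case: (ltngtP (ups pi (P pi j.+1).+1) (ups pi (P pi i))) => //; last slia.
    move=> h; exfalso; apply: H1r; first slia. by rewrite h andbT e1.
  apply: (H3 r); first slia.
  by rewrite Er at_eta ?E //; slia.
- have [_ _ h] := inactive_facts p1 (negbT A).
  have jn : P pi j.+1 < @size nat pi by slia.
  move: (h jn); rewrite ai => rle.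
  have e1 : ups pi (P pi j.+1).+1 = ups pi (P pi j.+1) by rewrite upsS A addn0.
  have rne : r <> j.+1 by move=> E; move: Pr; rewrite E; slia.
  apply: (H2 r); first slia.
  by rewrite Er e1 at_eta //; slia.
Qed.


Lemma wmax_le x M : (forall i, 1 <= i <= size x -> at_ x i <= M) -> wmax x <= M.
Proof.
elim: x => [|a x IH] H //=; rewrite geq_max; apply/andP; split.
- by have := H 1; rewrite /at_ /=; apply; slia.
- apply: IH => i Hi; have := H i.+1; rewrite /at_ /=.
  have -> : i = i.-1.+1 by slia.
  by apply; slia.
Qed.

Lemma wmax_ge x i : 1 <= i <= size x -> at_ x i <= wmax x.
Proof.
elim: x i => [|a x IH] i Hi; first by move: Hi => /=; slia.
case: i Hi => [|[|i]] Hi; first slia.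
- by rewrite /at_ /= leq_maxl.
- apply: leq_trans (leq_maxr a _); apply: (IH i.+1); move: Hi => /=; slia.
Qed.

Lemma ivt pi m v : 1 <= v <= ups pi m -> exists2 t, 1 <= t <= m & ups pi t = v.
Proof.
elim: m => [|m IH] H; first by move: H; rewrite ups0; slia.
case: (leqP v (ups pi m)) => h.
- by case: IH => [|t Ht Et]; [slia | exists t => //; slia].
- exists m.+1 => //; first slia.
  by move: H h; rewrite upsS; case: (active pi m) => /=; slia.
Qed.

Lemma eta_cayley pi : is_perm pi -> cayley (eta pi).
Proof.
move=> Hp; have U := perm_uniq' Hp; split.
- move=> i; rewrite size_eta => Hi; rewrite at_eta //.
- move=> k Hk.
  have Hw : wmax (eta pi) <= ups pi (@size nat pi).
    apply: wmax_le => i; rewrite size_eta => Hi; rewrite at_eta //.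
    have : i \in pi by rewrite mem_pi.
    by move/P_range => HP; apply: ups_mono; slia.
  case: (@ivt pi (@size nat pi) k); first slia.
  move=> t Ht Et; exists (at_ pi t); first by rewrite size_eta; apply: at_range.
  by rewrite at_eta ?P_at //; apply: at_range.
Qed.

Lemma eta_acd pi : is_perm pi -> cay_acd (eta pi).
Proof.
move=> Hp; split; first exact: eta_cayley.
split; first exact: not_a. split; [exact: not_c | exact: not_d].
Qed.


Definition R (x : seq nat) : rel nat :=
  fun a b => (at_ x a < at_ x b) || ((at_ x a == at_ x b) && (b <= a)).

Lemma R_trans x : transitive (R x).
Proof.
move=> b a c; rewrite /R; case: (ltngtP (at_ x a) (at_ x b)); case: (ltngtP (at_ x b) (at_ x c)) => //=;
  try slia.
Qed.

Lemma R_anti x : antisymmetric (R x).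
Proof. by move=> a b; rewrite /R => /andP []; case: (ltngtP (at_ x a) (at_ x b)) => //= _ h1 h2; apply/eqP; rewrite eqn_leq h1 h2. Qed.

Lemma R_total x : total (R x).
Proof. by move=> a b; rewrite /R; case: (ltngtP (at_ x a) (at_ x b)) => //= _; apply: leq_total. Qed.

Definition sigma x := sort (R x) (iota 1 (size x)).

Lemma sigma_perm x : perm_eq (sigma x) (iota 1 (size x)).
Proof. by rewrite /sigma perm_sort. Qed.

Lemma size_sigma x : @size nat (sigma x) = size x.
Proof. by rewrite (perm_size (sigma_perm x)) size_iota. Qed.

Lemma sigma_is_perm x : is_perm (sigma x).
Proof. by rewrite /is_perm size_sigma sigma_perm. Qed.

Lemma sorted_P x s u w : sorted (R x) s -> u \in s -> w \in s ->
  P s u < P s w -> R x u w.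
Proof.
move=> Hs mu mw lt.
have := sorted_ltn_nth (@R_trans x) 0 Hs.
move=> /(_ (index u s) (index w s)); rewrite !inE !index_mem !nth_index //.
by apply => //; move: lt; rewrite /P.
Qed.

Lemma sorted_P_conv x s u w : sorted (R x) s -> uniq s -> u \in s -> w \in s ->
  u <> w -> R x u w -> P s u < P s w.
Proof.
move=> Hs U mu mw ne r; case: (ltngtP (P s u) (P s w)) => // h.
- by have := sorted_P Hs mw mu h => r'; case: ne; apply: (@R_anti x); apply/andP; split.
- by case: ne; apply: P_inj h.
Qed.

Lemma sorted_mono x s u w : sorted (R x) s -> u \in s -> w \in s ->
  P s u <= P s w -> at_ x u <= at_ x w.
Proof.
move=> Hs mu mw; rewrite leq_eqVlt => /orP [/eqP h|h].
- by rewrite (P_inj mu mw h).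
- by move: (sorted_P Hs mu mw h); rewrite /R => /orP [|/andP [/eqP ->]]; slia.
Qed.

Lemma sorted_strict x s u w : sorted (R x) s -> uniq s -> u \in s -> w \in s ->
  at_ x u < at_ x w -> P s u < P s w.
Proof.
move=> Hs U mu mw h; apply: (@sorted_P_conv x) => //; first by move=> E; move: h; rewrite E; slia.
by rewrite /R h.
Qed.

Lemma sorted_class x s u w : sorted (R x) s -> uniq s -> u \in s -> w \in s ->
  at_ x u = at_ x w -> w < u -> P s u < P s w.
Proof.
move=> Hs U mu mw h wu; apply: (@sorted_P_conv x) => //; first by slia.
by rewrite /R h eqxx ltnn /= ltnW.
Qed.


Lemma sigma_ups x : cay_acd x -> forall t, 1 <= t <= size x ->
  ups (sigma x) t = at_ x (at_ (sigma x) t).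
Proof.
move=> [[Hpos Hcay] [Na [Nc Nd]]].
have Hp := sigma_is_perm x; have U := perm_uniq' Hp.
have Hs : sorted (R x) (sigma x) by apply: sort_sorted; apply: R_total.
have sz := size_sigma x.
have ms : forall k, (k \in sigma x) = (1 <= k <= size x) by move=> k; rewrite mem_pi // sz.
set s := sigma x in Hp U Hs sz ms *.
elim=> [|t IH] Ht; first slia.
case: (posnP t) => [t0|t0].
- subst t; rewrite ups1.
  have w1 : 1 <= wmax x by apply: leq_trans (Hpos 1 _) (wmax_ge _); slia.
  case: (Hcay 1); first slia.
  move=> k Hk xk.
  have mk : k \in s by rewrite ms.
  have r1 : 1 <= 1 <= @size nat s by slia.
  have m1 := at_mem r1; have P1 := P_at U r1.
  have h : at_ x (at_ s 1) <= at_ x k.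
    by apply: (sorted_mono Hs m1 mk); rewrite P1; have := P_range mk; slia.
  by move: (Hpos (at_ s 1)); rewrite -ms => /(_ m1); slia.
have {}IH := IH (_ : 1 <= t <= size x).
rewrite upsS IH; last slia.
have ra : 1 <= t <= @size nat s by slia.
have rc : 1 <= t.+1 <= @size nat s by slia.
have ma := at_mem ra; have mc := at_mem rc.
have Pa := P_at U ra; have Pc := P_at U rc.
have Ra := at_range Hp ra; have Rc := at_range Hp rc.
set a := at_ s t in ma Pa Ra *; set c := at_ s t.+1 in mc Pc Rc *.
have ac : a <> c by move=> E; move: Pa; rewrite E Pc; slia.
have Rac := sorted_P Hs ma mc (_ : P s a < P s c).
move: Rac; rewrite /R Pa Pc => /(_ (ltnSn _)) /orP [lt | /andP [/eqP eq ca]].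
- have lec : at_ x c <= wmax x by apply: wmax_ge; slia.
  have xc1 : at_ x c = (at_ x a).+1.
    case: (ltngtP (at_ x c) (at_ x a).+1) => // h; first slia.
    exfalso; case: (Hcay (at_ x a).+1); first slia.
    move=> k Hk xk; have mk : k \in s by rewrite ms.
    have h1 := sorted_strict Hs U ma mk (_ : at_ x a < at_ x k).
    have h2 := sorted_strict Hs U mk mc (_ : at_ x k < at_ x c).
    by move: h1 h2; rewrite Pa Pc xk => h1 h2; have := h1 (ltnSn _); have := h2 h; slia.
  have amin : forall k, k \in s -> at_ x k = at_ x a -> a <= k.
    move=> k mk xk; case: (leqP a k) => // ka.
    have := sorted_class Hs U ma mk (esym xk) ka; rewrite Pa => h.
    have := sorted_mono Hs mc mk (_ : P s c <= P s k); rewrite Pc xk => /(_ h); slia.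
  have cmax : forall k, k \in s -> at_ x k = at_ x c -> k <= c.
    move=> k mk xk; case: (leqP k c) => // ck.
    have := sorted_class Hs U mk mc xk ck; rewrite Pc => h.
    have := sorted_mono Hs mk ma (_ : P s k <= P s a); rewrite Pa xk => /(_ h); slia.
  case A: (active s t); first by rewrite addn1 xc1.
  exfalso; have [h1 h2 h3] := inactive_facts t0 (negbT A); rewrite -/a -/c in h1 h2 h3.
  have ca : c < a by have := h3 (_ : t < @size nat s); slia.
  have a2 : 2 <= a by move: h1 => /eqP; slia.
  have ma1 : a.-1 \in s by rewrite ms; slia.
  have Pa1 : t < P s a.-1.
    have : P s a.-1 <> t by rewrite -Pa => /(P_inj ma1 ma); slia.
    slia.
  have xa1 : at_ x a < at_ x a.-1.
    have := sorted_mono Hs ma ma1 (_ : P s a <= P s a.-1); rewrite Pa => /(_ (ltnW Pa1)).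
    rewrite leq_eqVlt => /orP [/eqP E|//]; have := amin _ ma1 (esym E); slia.
  have e : a.-1.+1 = a by rewrite prednK; slia.
  case: (ltngtP (at_ x a.-1) (at_ x c)) => h; first slia.
  + apply: Nc; exists c, a.-1; split; try slia.
    * have : c <= a.-1 by slia.
      by rewrite leq_eqVlt => /orP [/eqP E|//]; move: h; rewrite E; slia.
    * by rewrite e xc1 ltnSn /= -xc1.
    * split.
      - move=> m _; rewrite e xc1; slia.
      - move=> m Hm; rewrite e => E; have := amin m (_ : m \in s) E; rewrite ms; slia.
      - move=> m Hm E; have := cmax m (_ : m \in s) E; rewrite ms; slia.
  + apply: Nd; exists a.-1; split; try slia.
    * by rewrite e.
    * split.
      - move=> m _; rewrite e h xc1; slia.
      - move=> m Hm; rewrite e => E; have := amin m (_ : m \in s) E; rewrite ms; slia.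
      - move=> m Hm; rewrite h => E; have := cmax m (_ : m \in s) E; rewrite ms; slia.
- case A: (active s t); last by rewrite addn0 eq.
  exfalso; case: (active_facts t0 A); rewrite -/a -/c => h.
  + slia.
  + have ma1 : a.-1 \in s by rewrite ms; slia.
    have := sorted_P Hs ma1 ma; rewrite Pa => /(_ h); rewrite /R => /orP [lt|/andP [_ h']]; last slia.
    apply: Na; exists c, a.-1; split; try slia.
    * have : c <= a.-1 by slia.
      rewrite leq_eqVlt => /orP [/eqP E|//]; move: lt; rewrite -E eq; slia.
    * by rewrite prednK; slia.
  + slia.
Qed.


Lemma eta_sigma x : cay_acd x -> eta (sigma x) = x.
Proof.
move=> H; have Hp := sigma_is_perm x; have U := perm_uniq' Hp.
have sz := size_sigma x.
apply: (eq_from_nth (x0 := 0)); first by rewrite size_eta sz.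
move=> i; rewrite size_eta sz => Hi.
change (at_ (eta (sigma x)) i.+1 = at_ x i.+1).
have mi : i.+1 \in sigma x by rewrite mem_pi // sz; slia.
rewrite at_eta; last by rewrite sz; slia.
rewrite sigma_ups //; first by rewrite atP.
by have := P_range mi; rewrite sz.
Qed.

Lemma eta_inj pi : is_perm pi -> pi = sigma (eta pi).
Proof.
move=> Hp; have U := perm_uniq' Hp.
apply: (sorted_eq (@R_trans (eta pi)) (@R_anti (eta pi))).
- apply/(sortedP 0) => i Hi.
  change (R (eta pi) (at_ pi i.+1) (at_ pi i.+2)).
  have r1 : 1 <= i.+1 <= @size nat pi by slia.
  have r2 : 1 <= i.+2 <= @size nat pi by slia.
  rewrite /R (at_eta (at_range Hp r1)) (at_eta (at_range Hp r2)).
  rewrite !P_at // [ups pi i.+2]upsS.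
  case A: (active pi i.+1); first by rewrite /= addn1 ltnSn.
  have [_ _ h] := inactive_facts (ltn0Sn i) (negbT A).
  by rewrite /= addn0 eqxx ltnn /= h //; slia.
- apply: sort_sorted; apply: R_total.
- rewrite perm_sym /sigma perm_sort size_eta perm_sym; exact: Hp.
Qed.

Lemma perm11 n x : size x = n /\ cay_11 x <-> perm_eq x (iota 1 n).
Proof.
split.
- move=> [sz [[Hpos Hc] N11]].
  have Ux : uniq x.
    apply/(uniqP 0) => i j; rewrite !inE => hi hj E.
    case: (ltngtP i j) => // h; exfalso; apply: N11.
    + by exists i.+1, j.+1; split; try slia.
    + by exists j.+1, i.+1; split; try slia.
  have Pw : perm_eq x (iota 1 (wmax x)).
    apply: uniq_perm => //; first exact: iota_uniq.
    move=> k; rewrite mem_iota; apply/idP/idP.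
    + move=> /(nthP 0) [i hi <-].
      have := Hpos i.+1 (_ : 1 <= i.+1 <= size x); have := wmax_ge (_ : 1 <= i.+1 <= size x).
      rewrite /at_ /=; slia.
    + move=> hk; case: (Hc k); first slia.
      by move=> i hi <-; rewrite /at_; apply: mem_nth; slia.
  have := perm_size Pw; rewrite size_iota => e.
  by rewrite -sz e.
- move=> h; have sz : size x = n by rewrite (perm_size h) size_iota.
  have Ux : uniq x by rewrite (perm_uniq h) iota_uniq.
  have mx : forall k, (k \in x) = (1 <= k <= n) by move=> k; rewrite (perm_mem h) mem_iota; slia.
  have ax : forall i, 1 <= i <= size x -> 1 <= at_ x i <= n.
    by move=> i hi; rewrite -mx /at_; apply: mem_nth; slia.
  split => //; split; first split.
  + by move=> i /ax; slia.
  + move=> k hk.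
    have wn : wmax x <= n by apply: wmax_le => i /ax; slia.
    have : k \in x by rewrite mx; slia.
    move=> mk; exists (index k x).+1; first by rewrite -index_mem in mk; slia.
    by rewrite /at_ /= nth_index.
  + move=> [i [j [i1 ij jn E]]]; move: E; rewrite /at_ => /eqP.
    by rewrite nth_uniq //; slia.
Qed.


Theorem theorem7p5 :
  (forall x : seq nat, (exists pi, is_perm pi /\ eta pi = x) <-> cay_acd x) /\
  (forall n : nat, card_len cay_acd n n`! /\ card_len cay_11 n n`!).
Proof.
split.
- move=> x; split; first by move=> [pi [Hp <-]]; apply: eta_acd.
  by move=> H; exists (sigma x); split; [apply: sigma_is_perm | apply: eta_sigma].
- move=> n; split.
  + exists (map eta (permutations (iota 1 n))); split.
    * rewrite map_inj_in_uniq ?permutations_uniq // => p q.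
      rewrite !mem_permutations => hp hq E.
      have Hp : is_perm p by rewrite /is_perm (perm_size hp) size_iota.
      have Hq : is_perm q by rewrite /is_perm (perm_size hq) size_iota.
      by rewrite (eta_inj Hp) (eta_inj Hq) E.
    * move=> x; split.
      - move=> /mapP [p hp ->]; move: hp; rewrite mem_permutations => hp.
        have Hp : is_perm p by rewrite /is_perm (perm_size hp) size_iota.
        by split; [rewrite size_eta (perm_size hp) size_iota | apply: eta_acd].
      - move=> [sz H]; apply/mapP; exists (sigma x); last by rewrite eta_sigma.
        by rewrite mem_permutations -sz; apply: sigma_perm.
    * by rewrite size_map size_permutations ?iota_uniq // size_iota.
  + exists (permutations (iota 1 n)); split.
    * exact: permutations_uniq.
    * by move=> x; rewrite mem_permutations perm11.
    * by rewrite size_permutations ?iota_uniq // size_iota.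
Qed.
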